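(* For $n\ge1$, $$b_n(1;t,1,1)=\sum_{k=0}^{n-1}c(n,k+1)t^k\quad\text{and}\quad b_n(1;1,1,t)=b_n(1;t,t,1)=\sum_{k=0}^{n-1}e(n,k)t^k.$$ That is, the number of inversion sequences of length $n$ with exactly $k$ levels equals $c(n,k+1)$, and the number with exactly $k$ ascents, as well as the number with exactly $k$ indices that are levels or descents, equals $e(n,k)$.
   Context: An inversion sequence of length $n$ is a sequence $\rho=\rho_1\cdots\rho_n$ of integers with $1\le \rho_i\le i$ for all $i$; $I_n$ is the set of them. A level, descent, or ascent of $\rho$ is an index $i\in[n-1]$ with $\rho_i=\rho_{i+1}$, $\rho_i>\rho_{i+1}$, or $\rho_i<\rho_{i+1}$, respectively. Define $b_n(1;p,q,r)=\sum_{\rho\in I_n}p^{\mathrm{lev}(\rho)}q^{\mathrm{des}(\rho)}r^{\mathrm{asc}(\rho)}$. Here $c(n,k)$ is the signless Stirling number of the first kind (number of permutations of $[n]$ with $k$ cycles) and $e(n,k)$ is the Eulerian number (number of permutations of $[n]$ with $k$ ascents). *)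

(* Defs.v *)
From mathcomp Require Import all_boot all_order all_algebra all_fingroup.
Set Implicit Arguments. Unset Strict Implicit. Unset Printing Implicit Defensive.
Import GRing.Theory.
Local Open Scope ring_scope.

(* An inversion sequence of length n: rho_1 ... rho_n with 1 <= rho_i <= i.
   We index positions by i : 'I_n (0-based), so position i corresponds to the
   paper's index i+1 and the condition reads 1 <= rho i <= i+1.
   Values are stored in 'I_n.+1 (i.e. 0..n). *)
Definition is_inv_seq (n : nat) (rho : {ffun 'I_n -> 'I_n.+1}) : bool :=
  [forall i : 'I_n, (0 < rho i)%N && (rho i <= i.+1)%N].

Definition inv_vals (n : nat) (rho : {ffun 'I_n -> 'I_n.+1}) : seq nat :=
  [seq (rho i : nat) | i <- enum 'I_n].

Definition consec_count (r : rel nat) (s : seq nat) : nat :=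
  count (fun p : nat * nat => r p.1 p.2) (zip s (behead s)).

Definition lev (n : nat) (rho : {ffun 'I_n -> 'I_n.+1}) : nat :=
  consec_count (fun a b => a == b) (inv_vals rho).
Definition des (n : nat) (rho : {ffun 'I_n -> 'I_n.+1}) : nat :=
  consec_count (fun a b => b < a)%N (inv_vals rho).
Definition asc (n : nat) (rho : {ffun 'I_n -> 'I_n.+1}) : nat :=
  consec_count (fun a b => a < b)%N (inv_vals rho).

Definition bn (R : comNzRingType) (n : nat) (p q r : R) : R :=
  \sum_(rho : {ffun 'I_n -> 'I_n.+1} | is_inv_seq rho)
     p ^+ lev rho * q ^+ des rho * r ^+ asc rho.

Definition stirling1 (n k : nat) : nat :=
  #|[set s : 'S_n | #|porbits s| == k]|.

Definition perm_asc (n : nat) (s : 'S_n) : nat :=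
  consec_count (fun a b => a < b)%N [seq (s i : nat) | i <- enum 'I_n].
Definition eulerian (n k : nat) : nat :=
  #|[set s : 'S_n | perm_asc s == k]|.

(* Main.v *)
Set Warnings "-all".
Require Import Defs.
From mathcomp Require Import all_boot all_order all_algebra all_fingroup.
From mathcomp Require Import zify.
Import GRing.Theory.
Set Implicit Arguments. Unset Strict Implicit.
Local Open Scope ring_scope.
Lemma cc_nil r : consec_count r [::] = 0%N. Proof. by []. Qed.
Lemma cc_one r x : consec_count r [:: x] = 0%N. Proof. by []. Qed.
Lemma cc_cons2 r x y s :
  consec_count r [:: x, y & s] = (r x y + consec_count r (y :: s))%N.
Proof. by rewrite /consec_count /=. Qed.

Lemma cc_rcons r s a : s != [::] ->
  consec_count r (rcons s a) = (consec_count r s + r (last 0%N s) a)%N.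
Proof.
elim: s => // x [|y s] IH _ /=; first by rewrite cc_cons2 cc_one addnC.
by rewrite cc_cons2 (IH isT) cc_cons2 addnA.
Qed.

Lemma cc_map (f : nat -> nat) r s :
  consec_count r (map f s) = consec_count (fun a b => r (f a) (f b)) s.
Proof.
elim: s => // x [|y s] IH //=.
by rewrite !cc_cons2 -IH.
Qed.

Lemma cc_eq_in (P : pred nat) r r' s :
  (forall a b, P a -> P b -> r a b = r' a b) -> all P s ->
  consec_count r s = consec_count r' s.
Proof.
move=> H; elim: s => // x [|y s] IH //= /andP[Px /andP[Py Ps]].
by rewrite !cc_cons2 H // IH //= Py.
Qed.

Lemma cc_add r1 r2 s : (forall a b, ~~ (r1 a b && r2 a b)) ->
  (consec_count r1 s + consec_count r2 s)%N
  = consec_count (fun a b => r1 a b || r2 a b) s.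
Proof.
move=> H; elim: s => // x [|y s] IH //=.
rewrite !cc_cons2 -IH /=; have := H x y.
case: (r1 x y); case: (r2 x y) => //= _; rewrite ?add0n ?addnACA //.
by rewrite addnCA.
Qed.

Lemma cc_le r s : (consec_count r s <= (size s).-1)%N.
Proof.
rewrite /consec_count (leq_trans (count_size _ _)) // size_zip size_behead.
by rewrite geq_minr.
Qed.
Fixpoint invs (n : nat) : seq (seq nat) :=
  if n is m.+1 then [seq rcons s a | s <- invs m, a <- iota 1 m.+1]
  else [:: [::]].

Lemma mem_invs n v : v \in invs n <->
  size v = n /\ (forall i, i < n -> 0 < nth 0 v i <= i.+1)%N.
Proof.
elim: n v => [|n IH] v.
  rewrite /= inE; split=> [/eqP -> //|[/size0nil -> _]]; exact: eqxx.
split.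
  case/allpairsP=> [[w a] [Hw0 Ha ->]]; move/IH: Hw0 => [Hw Hn].
  move: Ha; rewrite mem_iota add1n /= => Ha.
  rewrite size_rcons Hw; split=> // i Hi; rewrite nth_rcons Hw.
  case: (ltnP i n) => Hin; first exact: Hn.
  have -> : i = n by apply/eqP; rewrite eqn_leq Hin -ltnS Hi.
  by rewrite eqxx.
case: (lastP v) => [[] //|w a]; rewrite size_rcons => [[[Hw] Hn]].
apply: allpairs_f.
  apply/IH; split=> // i Hi; have := Hn i (ltnW Hi).
  by rewrite nth_rcons Hw Hi.
have := Hn n (ltnSn n); rewrite nth_rcons Hw ltnn eqxx.
by rewrite mem_iota add1n ltnS.
Qed.

Lemma uniq_invs n : uniq (invs n).
Proof.
elim: n => // n IH; apply: allpairs_uniq => //; first exact: iota_uniq.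
by move=> [w a] [w' b] _ _ /= /rcons_inj [-> ->].
Qed.

Lemma nth_inv_vals n (rho : {ffun 'I_n -> 'I_n.+1}) (i : 'I_n) :
  nth 0%N (inv_vals rho) i = rho i.
Proof.
rewrite /inv_vals (nth_map i) ?size_enum_ord //.
by congr (nat_of_ord (rho _)); apply: val_inj; rewrite /= nth_enum_ord.
Qed.

Lemma size_inv_vals n (rho : {ffun 'I_n -> 'I_n.+1}) : size (inv_vals rho) = n.
Proof. by rewrite /inv_vals size_map size_enum_ord. Qed.

Lemma sum_invs (R : nmodType) n (F : seq nat -> R) :
  \sum_(rho : {ffun 'I_n -> 'I_n.+1} | is_inv_seq rho) F (inv_vals rho)
  = \sum_(v <- invs n) F v.
Proof.
rewrite -(big_image _ _ (@inv_vals n) (@is_inv_seq n)).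
apply: perm_big; apply: uniq_perm.
- rewrite map_inj_in_uniq ?enum_uniq // => r1 r2 _ _ E.
  apply/ffunP=> i; apply: val_inj; by rewrite /= -!nth_inv_vals E.
- exact: uniq_invs.
move=> v; apply/idP/idP.
  case/mapP=> rho; rewrite mem_enum => /forallP Hr ->.
  apply/mem_invs; rewrite size_inv_vals; split=> // i Hi.
  by rewrite (@nth_inv_vals _ rho (Ordinal Hi)); exact: Hr.
case/mem_invs=> Hs Hn.
have Hb (i : 'I_n) : (nth 0%N v i < n.+1)%N.
  have /andP[_ H] := Hn i (ltn_ord i); apply: (leq_ltn_trans H); rewrite ltnS; exact: ltn_ord.
pose rho := [ffun i : 'I_n => Ordinal (Hb i)].
have -> : v = inv_vals rho.
  apply: (@eq_from_nth _ 0%N) => [|i Hi]; first by rewrite size_inv_vals.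
  by rewrite Hs in Hi; rewrite (@nth_inv_vals _ rho (Ordinal Hi)) ffunE.
apply: map_f; rewrite mem_enum; apply/forallP=> i.
by rewrite ffunE; exact: Hn.
Qed.

Definition pvals n (s : 'S_n) : seq nat := [seq (s i : nat) | i <- enum 'I_n].

Lemma size_pvals n (s : 'S_n) : size (pvals s) = n.
Proof. by rewrite /pvals size_map size_enum_ord. Qed.

Lemma pvals_lift n (s : 'S_n) (j : 'I_n.+1) :
  pvals (lift_perm ord_max j s) = rcons (map (bump j) (pvals s)) j.
Proof.
rewrite /pvals enum_ordSr map_rcons lift_perm_id -!map_comp; congr rcons.
apply: eq_map => i /=.
have -> : widen_ord (leqnSn n) i = lift ord_max i.
  by apply: val_inj; rewrite /= /bump leqNgt ltn_ord.
by rewrite lift_perm_lift.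
Qed.

Lemma last_pvals n (s : 'S_n.+1) : last 0%N (pvals s) = s ord_max.
Proof. by rewrite /pvals enum_ordSr map_rcons last_rcons. Qed.

Lemma lift_perm_inj n (i j : 'I_n.+1) : injective (@lift_perm n i j).
Proof.
move=> s t E; apply/permP => k; apply: (@lift_inj _ j).
by rewrite -!(lift_perm_lift i) E.
Qed.

Lemma bij_card (A B : finType) (h : A -> B) :
  injective h -> #|A| = #|B| -> bijective h.
Proof. by move=> Hi Hc; apply: inj_card_bij => //; rewrite Hc. Qed.

Lemma card_SnI n : #|{: 'S_n * 'I_n.+1}| = #|{: 'S_n.+1}|.
Proof. by rewrite card_prod !card_Sn card_ord factS mulnC. Qed.

Lemma sum_Sn_lift (R : nmodType) n (F : 'S_n.+1 -> R) :
  \sum_(s : 'S_n.+1) F s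
  = \sum_(s : 'S_n) \sum_(j : 'I_n.+1) F (lift_perm ord_max j s).
Proof.
pose h (p : 'S_n * 'I_n.+1) := lift_perm ord_max p.2 p.1.
have hB : bijective h.
  apply: bij_card; last exact: card_SnI.
  move=> [s j] [t k] E; rewrite /h /= in E.
  have Ejk : j = k by rewrite -(lift_perm_id ord_max j s) E lift_perm_id.
  by subst k; rewrite (lift_perm_inj E).
rewrite (reindex h (onW_bij _ hB)) pair_big /=; apply: eq_bigl => p //.
Qed.

Lemma sum_Sn_cyc (R : nmodType) n (F : 'S_n.+1 -> R) :
  \sum_(s : 'S_n.+1) F s
  = \sum_(s : 'S_n) \sum_(j : 'I_n.+1)
       F (tperm ord_max j * lift_perm ord_max ord_max s)%g.
Proof.
pose h (p : 'S_n * 'I_n.+1) :=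
  (tperm ord_max p.2 * lift_perm ord_max ord_max p.1)%g.
have hB : bijective h.
  apply: bij_card; last exact: card_SnI.
  move=> [s j] [t k] E; rewrite /h /= in E.
  have Hj : forall (u : 'S_n) (i : 'I_n.+1),
      (tperm ord_max i * lift_perm ord_max ord_max u)%g i = ord_max.
    by move=> u i; rewrite permM tpermR lift_perm_id.
  have Ejk : j = k.
    apply: (@perm_inj _ ((tperm ord_max k * lift_perm ord_max ord_max t)%g)).
    by rewrite -{1}E !Hj.
  subst k; move/mulgI: E => E.
  by rewrite (lift_perm_inj E).
rewrite (reindex h (onW_bij _ hB)) pair_big /=; apply: eq_bigl => p //.
Qed.

Lemma lift_permX n (s : 'S_n) (x : 'I_n) i :
  ((lift_perm ord_max ord_max s) ^+ i)%g (lift ord_max x)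
  = lift ord_max ((s ^+ i)%g x).
Proof.
elim: i => [|i IH]; first by rewrite !expg0 !perm1.
by rewrite !expgSr !permM IH lift_perm_lift.
Qed.

Lemma porbit_lift n (s : 'S_n) x :
  porbit (lift_perm ord_max ord_max s) (lift ord_max x)
  = [set lift ord_max y | y in porbit s x].
Proof.
apply/setP => y; apply/porbitP/imsetP => [[i ->]|[z /porbitP [i ->] ->]].
  by exists ((s ^+ i)%g x); [exact: mem_porbit | exact: lift_permX].
by exists i; rewrite lift_permX.
Qed.

Lemma porbit_max n (s : 'S_n) :
  porbit (lift_perm ord_max ord_max s) ord_max = [set ord_max].
Proof.
apply/setP => y; rewrite inE; apply/porbitP/eqP => [[i ->]|->].
  by rewrite permX_fix // lift_perm_id.
by exists 0%N; rewrite expg0 perm1.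
Qed.

Lemma porbits_lift n (s : 'S_n) :
  #|porbits (lift_perm ord_max ord_max s)| = (#|porbits s|).+1.
Proof.
set sh := lift_perm _ _ s.
pose f := fun A : {set 'I_n} => [set lift ord_max y | y in A].
have -> : porbits sh = [set ord_max] |: f @: porbits s.
  apply/setP => C; rewrite !inE; apply/imsetP/orP.
    case=> y _ ->; case: (unliftP ord_max y) => [x|] ->.
      by right; rewrite porbit_lift; apply: imset_f; apply: imset_f.
    by left; rewrite porbit_max.
  case=> [/eqP ->|/imsetP [A /imsetP [x _ ->] ->]].
    by exists ord_max; rewrite ?porbit_max.
  by exists (lift ord_max x); rewrite ?porbit_lift.
rewrite cardsU1 card_imset; last exact: imset_inj (@lift_inj _ ord_max).
suff -> : [set ord_max] \notin f @: porbits s by [].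
apply/imsetP => [[A _ E]].
have : (ord_max : 'I_n.+1) \in [set ord_max] by rewrite set11.
rewrite E => /imsetP [y _ Ey].
by move: (neq_lift ord_max y); rewrite -Ey eqxx.
Qed.

Lemma porbits_cyc n (s : 'S_n) j :
  #|porbits (tperm ord_max j * lift_perm ord_max ord_max s)%g|
  = (#|porbits s| + (j == ord_max))%N.
Proof.
have := porbits_mul_tperm (lift_perm ord_max ord_max s) ord_max j.
rewrite porbits_lift /=.
case: (eqVneq j ord_max) => [->|ne].
  by rewrite porbit_id /= !addn0 => ->; rewrite addn1.
have -> : ord_max \notin porbit (lift_perm ord_max ord_max s) j.
  by rewrite porbit_sym porbit_max inE.
rewrite /=; lia.
Qed.

Notation P := {poly int}.

Lemma sum_iota_X (l m k : nat) : l \in iota m k ->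
  \sum_(a <- iota m k) ('X : P) ^+ (l == a) = 'X + (k.-1)%:R.
Proof.
move=> Hl; rewrite (bigD1_seq l) ?iota_uniq //= eqxx expr1; congr (_ + _).
rewrite (eq_bigr (fun _ => 1)) => [|a]; last first.
  by rewrite eq_sym => /negbTE ->; rewrite expr0.
rewrite (eq_bigr (fun _ => (1%N)%:R)) // -natr_sum sum1_count; congr (_%:R).
have := count_predC (pred1 l) (iota m k).
rewrite count_uniq_mem ?iota_uniq // Hl size_iota.
have -> : count (predC (pred1 l)) (iota m k) = count (fun a => a != l) (iota m k).
  by apply: eq_count => a.
lia.
Qed.

Definition Cpoly n : P := \sum_(s : 'S_n) 'X ^+ #|porbits s|.

Lemma sum_ord_X n : \sum_(j : 'I_n.+1) ('X : P) ^+ (j == ord_max) = 'X + n%:R.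
Proof.
have -> : \sum_(j : 'I_n.+1) ('X : P) ^+ (j == ord_max)
        = \sum_(j < n.+1) ('X : P) ^+ (n == j).
  by apply: eq_bigr => j _; rewrite eq_sym.
rewrite -(big_mkord xpredT (fun j => ('X : P) ^+ (n == j))) /index_iota subn0.
rewrite sum_iota_X; first reflexivity.
by rewrite mem_iota add0n ltnSn.
Qed.

Lemma Cpoly_rec n : Cpoly n.+1 = ('X + n%:R) * Cpoly n.
Proof.
rewrite /Cpoly sum_Sn_cyc mulr_sumr; apply: eq_bigr => s _.
under eq_bigr do rewrite porbits_cyc exprD.
by rewrite -mulr_sumr mulrC sum_ord_X.
Qed.

Lemma Cpoly1 : Cpoly 1 = 'X.
Proof.
rewrite /Cpoly (big_pred1 1%g) => [|s]; last by rewrite /= permS1 eqxx.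
rewrite card_imset ?card_ord ?expr1 // => x y _.
by rewrite !ord1.
Qed.

Lemma last_invs n v : v \in invs n.+1 -> v != [::] /\ (0 < last 0 v <= n.+1)%N.
Proof.
case/mem_invs => Hs Hn; split; first by rewrite -size_eq0 Hs.
by rewrite -nth_last Hs; apply: Hn.
Qed.

Lemma invs_rec (R : nmodType) n (F : seq nat -> R) :
  \sum_(v <- invs n.+1) F v = \sum_(v <- invs n) \sum_(a <- iota 1 n.+1) F (rcons v a).
Proof.
have -> : invs n.+1 = [seq rcons s a | s <- invs n, a <- iota 1 n.+1] by [].
by rewrite big_allpairs_dep.
Qed.

Definition Lpoly n : P := \sum_(v <- invs n) 'X ^+ consec_count (fun a b => a == b) v.

Lemma Lpoly_rec n : Lpoly n.+2 = ('X + n.+1%:R) * Lpoly n.+1.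
Proof.
rewrite /Lpoly invs_rec mulr_sumr; apply: eq_big_seq => v Hv.
have [Hne Hl] := last_invs Hv.
under eq_bigr do rewrite cc_rcons // exprD.
rewrite -mulr_sumr mulrC sum_iota_X //.
rewrite mem_iota; lia.
Qed.

Lemma Lpoly1 : Lpoly 1 = 1.
Proof. by rewrite /Lpoly /= big_seq1. Qed.

Lemma Cpoly_Lpoly n : Cpoly n.+1 = 'X * Lpoly n.+1.
Proof.
elim: n => [|n IH]; first by rewrite Cpoly1 Lpoly1 mulr1.
by rewrite Cpoly_rec Lpoly_rec IH mulrCA.
Qed.

Definition WI (r : rel nat) n (G : nat -> P) : P :=
  \sum_(v <- invs n.+1) 'X ^+ consec_count r v * G (last 0%N v).

Definition WP (r : rel nat) n (G : nat -> P) : P :=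
  \sum_(s : 'S_n.+1) 'X ^+ consec_count r (pvals s) * G (s ord_max : nat).

Lemma WP_ext r n G1 G2 : G1 =1 G2 -> WP r n G1 = WP r n G2.
Proof. by move=> E; apply: eq_bigr => s _; rewrite E. Qed.

Lemma WI_rec r n G :
  WI r n.+1 G = WI r n (fun l => \sum_(a <- iota 1 n.+2) 'X ^+ r l a * G a).
Proof.
rewrite /WI invs_rec; apply: eq_big_seq => v Hv.
have [Hne _] := last_invs Hv.
rewrite mulr_sumr; apply: eq_bigr => a _.
by rewrite cc_rcons // last_rcons exprD mulrA.
Qed.

Lemma last_map0 (f : nat -> nat) s : s != [::] -> last 0%N (map f s) = f (last 0%N s).
Proof. by case: s => // x s _ /=; rewrite last_map. Qed.

Lemma WP_rec r rr
  (H1 : forall j a b, r (bump j a) (bump j b) = r a b)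
  (H2 : forall j a, r (bump j a) j = rr a j) n G :
  WP r n.+1 G = WP r n (fun i => \sum_(j < n.+2) 'X ^+ rr i j * G j).
Proof.
rewrite /WP sum_Sn_lift; apply: eq_bigr => s _.
rewrite mulr_sumr; apply: eq_bigr => j _.
have Hne : pvals s != [::] by rewrite -size_eq0 size_pvals.
have Hne' : map (bump j) (pvals s) != [::] by rewrite -size_eq0 size_map size_pvals.
rewrite pvals_lift lift_perm_id cc_rcons // cc_map last_map0 // last_pvals H2.
rewrite exprD mulrA; congr (_ ^+ _ * _ * _).
apply: (@cc_eq_in predT) => [a b _ _|]; first by rewrite H1.
exact: all_predT.
Qed.

Lemma W_eq r rr r'
  (H1 : forall j a b, r (bump j a) (bump j b) = r a b)
  (H2 : forall j a, r (bump j a) j = rr a j)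
  (H3 : forall i j, rr i j = r' i.+1 j.+1) n G :
  WP r n (fun i => G i.+1) = WI r' n G.
Proof.
elim: n G => [|n IH] G.
  rewrite /WP /WI (big_pred1 1%g) => [|s]; last by rewrite /= permS1 eqxx.
  rewrite /= big_seq1 perm1.
  have -> : consec_count r (pvals (1%g : 'S_1)) = 0%N.
    by apply/eqP; rewrite -leqn0 (leq_trans (cc_le _ _)) // size_pvals.
  by [].
rewrite (WP_rec H1 H2) WI_rec -IH; apply: WP_ext => i.
rewrite -(big_mkord xpredT (fun j => 'X ^+ rr i j * G j.+1)) /index_iota subn0.
rewrite (iotaDl 1 0) big_map; apply: eq_bigr => j _.
by rewrite H3.
Qed.

Lemma sum_perm_W (r rr r' : nat -> nat -> bool)
  (H1 : forall j a b, r (bump j a) (bump j b) = r a b)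
  (H2 : forall j a, r (bump j a) j = rr a j)
  (H3 : forall i j, rr i j = r' i.+1 j.+1) n :
  \sum_(s : 'S_n.+1) ('X : P) ^+ consec_count r (pvals s)
  = \sum_(v <- invs n.+1) ('X : P) ^+ consec_count r' v.
Proof.
have := @W_eq r rr r' H1 H2 H3 n (fun _ => 1).
rewrite /WP /WI => E.
rewrite (eq_bigr (fun s => 'X ^+ consec_count r (pvals s) * 1)); last by move=> *; rewrite mulr1.
by rewrite E; apply: eq_bigr => v _; rewrite mulr1.
Qed.

Lemma bump_ltn j a b : (bump j a < bump j b)%N = (a < b)%N.
Proof. rewrite /bump; case: (leqP j a); case: (leqP j b) => * /=; lia. Qed.

Lemma asc_eq n :
  \sum_(s : 'S_n.+1) ('X : P) ^+ consec_count (fun a b => a < b)%N (pvals s)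
  = \sum_(v <- invs n.+1) ('X : P) ^+ consec_count (fun a b => a < b)%N v.
Proof.
apply: (@sum_perm_W _ (fun a b => a < b)%N).
- by move=> j a b; rewrite bump_ltn.
- by move=> j a; rewrite /bump; case: (leqP j a) => * /=; lia.
- by [].
Qed.

Lemma des_eq n :
  \sum_(s : 'S_n.+1) ('X : P) ^+ consec_count (fun a b => b < a)%N (pvals s)
  = \sum_(v <- invs n.+1) ('X : P) ^+ consec_count (fun a b => b <= a)%N v.
Proof.
apply: (@sum_perm_W _ (fun a j => j <= a)%N).
- by move=> j a b; rewrite bump_ltn.
- by move=> j a; rewrite /bump; case: (leqP j a) => * /=; lia.
- by [].
Qed.

Lemma asc_des_sym n :
  \sum_(s : 'S_n) ('X : P) ^+ consec_count (fun a b => a < b)%N (pvals s)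
  = \sum_(s : 'S_n) ('X : P) ^+ consec_count (fun a b => b < a)%N (pvals s).
Proof.
pose w : 'S_n := perm (@rev_ord_inj n).
rewrite (reindex_inj (mulIg w)); apply: eq_bigr => s _.
have -> : pvals (s * w)%g = map (fun x => n - x.+1)%N (pvals s).
  rewrite /pvals -map_comp; apply: eq_map => i /=.
  by rewrite permM permE.
rewrite cc_map; congr (_ ^+ _).
apply: (@cc_eq_in (fun x => x < n)%N) => [a b Ha Hb|]; first lia.
by apply/allP => x /mapP [i _ ->].
Qed.

Lemma sum_card_X (I : finType) (f : I -> nat) n : (forall i, f i < n)%N ->
  \sum_(k < n) (#|[set i | f i == k]|)%:R *: ('X : P) ^+ k
  = \sum_i 'X ^+ (f i).
Proof.
move=> Hf; symmetry.
transitivity (\sum_i \sum_(k < n) ((f i == k)%:R : int) *: ('X : P) ^+ k).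
  apply: eq_bigr => i _; rewrite (bigD1 (Ordinal (Hf i))) //= eqxx scale1r.
  rewrite big1 ?addr0 // => k Hk.
  have -> : (f i == k) = false.
    apply/negbTE; apply: contra Hk => /eqP E; apply/eqP; apply: val_inj.
    by rewrite /= E.
  by rewrite scale0r.
rewrite exchange_big; apply: eq_bigr => k _; rewrite -scaler_suml; congr (_ *: _).
rewrite -sum1dep_card natr_sum [RHS]big_mkcond /=; apply: eq_bigr => i _.
by case: (f i == k).
Qed.

Lemma bn_lev n : bn n 'X 1 1 = Lpoly n.
Proof.
rewrite /bn /Lpoly -sum_invs; apply: eq_bigr => rho _.
by rewrite !expr1n !mulr1.
Qed.

Lemma bn_asc n : bn n 1 1 'X =
  \sum_(v <- invs n) ('X : P) ^+ consec_count (fun a b => a < b)%N v.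
Proof.
rewrite /bn -sum_invs; apply: eq_bigr => rho _.
by rewrite !expr1n !mul1r.
Qed.

Lemma bn_levdes n : bn n 'X 'X 1 =
  \sum_(v <- invs n) ('X : P) ^+ consec_count (fun a b => b <= a)%N v.
Proof.
rewrite /bn -sum_invs; apply: eq_bigr => rho _.
rewrite expr1n mulr1 -exprD /lev /des cc_add; last first.
  by move=> a b; apply/negP => /andP [/eqP -> ]; rewrite ltnn.
congr (_ ^+ _); apply: (@cc_eq_in predT) => [a b _ _|]; last exact: all_predT.
by rewrite [(b <= a)%N]leq_eqVlt eq_sym.
Qed.

Lemma eul_sum n :
  \sum_(s : 'S_n.+1) ('X : P) ^+ consec_count (fun a b => a < b)%N (pvals s)
  = \sum_(k < n.+1) (eulerian n.+1 k)%:R *: 'X^k.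
Proof.
rewrite /eulerian (@sum_card_X _ (fun s : 'S_n.+1 => perm_asc s) n.+1) //.
move=> s; rewrite /perm_asc (leq_ltn_trans (cc_le _ _)) //.
by rewrite size_map size_enum_ord.
Qed.

Unset Implicit Arguments.

Theorem theorem3p5 (n : nat) : (1 <= n)%N ->
  bn n ('X : {poly int}) 1 1 = \sum_(k < n) (stirling1 n k.+1)%:R *: 'X^k
  /\ bn n (1 : {poly int}) 1 'X = \sum_(k < n) (eulerian n k)%:R *: 'X^k
  /\ bn n ('X : {poly int}) 'X 1 = \sum_(k < n) (eulerian n k)%:R *: 'X^k.
Proof.
case: n => // n _; split; last split.
- rewrite bn_lev; apply: (@mulfI _ 'X); first by rewrite polyX_eq0.
  rewrite -Cpoly_Lpoly /Cpoly.
  have Hge : forall s : 'S_n.+1, (0 < #|porbits s|)%N.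
    move=> s; rewrite card_gt0; apply/set0Pn; exists (porbit s ord0).
    exact: imset_f.
  have Hle : forall s : 'S_n.+1, (#|porbits s| <= n.+1)%N.
    by move=> s; rewrite (leq_trans (leq_imset_card _ _)) // card_ord.
  have -> : \sum_(k < n.+1) (stirling1 n.+1 k.+1)%:R *: ('X : P) ^+ k
      = \sum_(k < n.+1) (#|[set s : 'S_n.+1 | (#|porbits s|).-1 == k]|)%:R
           *: ('X : P) ^+ k.
    apply: eq_bigr => k _; rewrite /stirling1; congr (_%:R *: _).
    apply: eq_card => s; rewrite !inE.
    by rewrite -(prednK (Hge s)) eqSS.
  rewrite sum_card_X; last first.
    by move=> s; rewrite -ltnS (prednK (Hge s)) ltnS.
  rewrite mulr_sumr; apply: eq_bigr => s _.
  by rewrite -exprS (prednK (Hge s)).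
- by rewrite bn_asc -asc_eq eul_sum.
- by rewrite bn_levdes -des_eq -asc_des_sym eul_sum.
Qed.
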